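(* Let $(A,\to,1)$ be any algebra of type $(2,0)$. Then the following implications hold: (0) (Re) implies (S); (00) (M) implies (N); (1) (L) and (An) imply (N); (2) (K) and (An) imply (N); (3) (C) and (An) imply (Ex); (3') (Ex) and (Re) imply (C); (4) (Re) and (Ex) imply (D); (5) (Re), (Ex) and (An) imply (M); (5') (Re), (Ex) and (An) imply (N); (6) (Re) and (K) imply (L); (7) (N) and (K) imply (L); (7') (M) and (K) imply (L); (8) (Re), (L) and (Ex) imply (K); (9) (M), (L) and (B) imply (K); (9') (M), (L) and ( ** ) imply (K); (10) if (Ex) holds, then (B) holds if and only if (BB) holds; (10') (Ex) and (B) imply (BB); (10'') (Ex) and (BB) imply (B); (11) (Re), (Ex) and ( * ) imply (BB); (12) (N) and (B) imply ( * ); (12') (M) and (B) imply ( * ); (13) (N) and ( * ) imply (Tr); (13') (M) and ( * ) imply (Tr); (14) (N) and (B) imply (Tr); (14') (M) and (B) imply (Tr); (15) (N) and (BB) imply ( ** ); (15') (M) and (BB) imply ( ** ); (16) (N) and ( ** ) imply (Tr); (16') (M) and ( ** ) imply (Tr); (17) (N) and (BB) imply (Tr); (17') (M) and (BB) imply (Tr); (18) (M) and (BB) imply (Re); (18') (M) and (BB) imply (D); (19) (M) and (B) imply (Re); (20) (BB), (D) and (N) imply (C); (20') (M) and (BB) imply (C); (21) (BB), (D), (N) and (An) imply (Ex); (21') (BB), (D), (L) and (An) imply (Ex); (21'') (M), (BB) and (An) imply (Ex); (22) (B), (C), (K) and (An) imply (Re); (23) (BB), (D), (Re) and (An) imply (N);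 (24) (Re), (Ex) and (Tr) imply ( ** ).
   Context: An algebra $(A,\to,1)$ of type $(2,0)$ is a set $A$ with a binary operation $\to$ and a constant $1\in A$. The following properties are considered, each required for all $x,y,z\in A$: (An) $x\to y=1$ and $y\to x=1$ imply $x=y$; (B) $(y\to z)\to((x\to y)\to(x\to z))=1$; (BB) $(y\to z)\to((z\to x)\to(y\to x))=1$; ( * ) $y\to z=1$ implies $(x\to y)\to(x\to z)=1$; ( ** ) $y\to z=1$ implies $(z\to x)\to(y\to x)=1$; (C) $(x\to(y\to z))\to(y\to(x\to z))=1$; (D) $y\to((y\to x)\to x)=1$; (Ex) $x\to(y\to z)=y\to(x\to z)$; (K) $x\to(y\to x)=1$; (L) $x\to 1=1$; (M) $1\to x=x$; (N) $1\to x=1$ implies $x=1$; (Re) $x\to x=1$; (S) $x=y$ implies $x\to y=1$; (Tr) $x\to y=1$ and $y\to z=1$ imply $x\to z=1$. *)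

(* Defs.v *)
Set Implicit Arguments.

Section Props.
Set Implicit Arguments.
Variables (A : Type) (imp : A -> A -> A) (one : A).
Local Infix "-->" := imp (at level 55, right associativity).

Definition P_An : Prop := forall x y, x --> y = one -> y --> x = one -> x = y.
Definition P_B : Prop := forall x y z, (y --> z) --> ((x --> y) --> (x --> z)) = one.
Definition P_BB : Prop := forall x y z, (y --> z) --> ((z --> x) --> (y --> x)) = one.
Definition P_star : Prop := forall x y z, y --> z = one -> (x --> y) --> (x --> z) = one.
Definition P_starstar : Prop := forall x y z, y --> z = one -> (z --> x) --> (y --> x) = one.
Definition P_C : Prop := forall x y z, (x --> (y --> z)) --> (y --> (x --> z)) = one.
Definition P_D : Prop := forall x y, y --> ((y --> x) --> x) = one.
Definition P_Ex : Prop := forall x y z, x --> (y --> z) = y --> (x --> z).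
Definition P_K : Prop := forall x y, x --> (y --> x) = one.
Definition P_L : Prop := forall x, x --> one = one.
Definition P_M : Prop := forall x, one --> x = x.
Definition P_N : Prop := forall x, one --> x = one -> x = one.
Definition P_Re : Prop := forall x, x --> x = one.
Definition P_S : Prop := forall x y, x = y -> x --> y = one.
Definition P_Tr : Prop := forall x y z, x --> y = one -> y --> z = one -> x --> z = one.
End Props.

(* Main.v *)
Require Import Defs.


Ltac u := unfold P_An, P_B, P_BB, P_star, P_starstar, P_C, P_D, P_Ex, P_K, P_L, P_M, P_N, P_Re, P_S, P_Tr in *.
Theorem proposition2p1 (A : Type) (imp : A -> A -> A) (one : A) :
  let An := P_An imp one in let B := P_B imp one in let BB := P_BB imp one in
  let Star := P_star imp one in let StarStar := P_starstar imp one in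
  let C := P_C imp one in let D := P_D imp one in let Ex := P_Ex imp in
  let K := P_K imp one in let L := P_L imp one in let M := P_M imp one in
  let N := P_N imp one in let Re := P_Re imp one in let S := P_S imp one in
  let Tr := P_Tr imp one in
  (* (0) *)   (Re -> S) /\
  (* (00) *)  (M -> N) /\
  (* (1) *)   (L -> An -> N) /\
  (* (2) *)   (K -> An -> N) /\
  (* (3) *)   (C -> An -> Ex) /\
  (* (3') *)  (Ex -> Re -> C) /\
  (* (4) *)   (Re -> Ex -> D) /\
  (* (5) *)   (Re -> Ex -> An -> M) /\
  (* (5') *)  (Re -> Ex -> An -> N) /\
  (* (6) *)   (Re -> K -> L) /\
  (* (7) *)   (N -> K -> L) /\
  (* (7') *)  (M -> K -> L) /\
  (* (8) *)   (Re -> L -> Ex -> K) /\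
  (* (9) *)   (M -> L -> B -> K) /\
  (* (9') *)  (M -> L -> StarStar -> K) /\
  (* (10) *)  (Ex -> (B <-> BB)) /\
  (* (10') *) (Ex -> B -> BB) /\
  (* (10'') *)(Ex -> BB -> B) /\
  (* (11) *)  (Re -> Ex -> Star -> BB) /\
  (* (12) *)  (N -> B -> Star) /\
  (* (12') *) (M -> B -> Star) /\
  (* (13) *)  (N -> Star -> Tr) /\
  (* (13') *) (M -> Star -> Tr) /\
  (* (14) *)  (N -> B -> Tr) /\
  (* (14') *) (M -> B -> Tr) /\
  (* (15) *)  (N -> BB -> StarStar) /\
  (* (15') *) (M -> BB -> StarStar) /\
  (* (16) *)  (N -> StarStar -> Tr) /\
  (* (16') *) (M -> StarStar -> Tr) /\
  (* (17) *)  (N -> BB -> Tr) /\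
  (* (17') *) (M -> BB -> Tr) /\
  (* (18) *)  (M -> BB -> Re) /\
  (* (18') *) (M -> BB -> D) /\
  (* (19) *)  (M -> B -> Re) /\
  (* (20) *)  (BB -> D -> N -> C) /\
  (* (20') *) (M -> BB -> C) /\
  (* (21) *)  (BB -> D -> N -> An -> Ex) /\
  (* (21') *) (BB -> D -> L -> An -> Ex) /\
  (* (21'') *)(M -> BB -> An -> Ex) /\
  (* (22) *)  (B -> C -> K -> An -> Re) /\
  (* (23) *)  (BB -> D -> Re -> An -> N) /\
  (* (24) *)  (Re -> Ex -> Tr -> StarStar).

Proof.
intros An B BB Star StarStar C D Ex K L M N Re S Tr.
subst An B BB Star StarStar C D Ex K L M N Re S Tr.
assert (hMN : P_M imp one -> P_N imp one) by (u; intros hM x h; rewrite hM in h; exact h).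
assert (h1 : P_L imp one -> P_An imp one -> P_N imp one) by (u; intros hL hA x h; apply hA; auto).
assert (h2 : P_K imp one -> P_An imp one -> P_N imp one).
{ u; intros hK hA x h; apply hA; auto. specialize (hK x one). rewrite h in hK. exact hK. }
assert (h3 : P_C imp one -> P_An imp one -> P_Ex imp) by (u; intros hC hA x y z; apply hA; apply hC).
assert (h3' : P_Ex imp -> P_Re imp one -> P_C imp one) by (u; intros hE hR x y z; rewrite (hE y x z); apply hR).
assert (h4 : P_Re imp one -> P_Ex imp -> P_D imp one) by (u; intros hR hE x y; rewrite hE; apply hR).
assert (h5' : P_Re imp one -> P_Ex imp -> P_An imp one -> P_N imp one).
{ u; intros hR hE hA y h. apply hA; auto. assert (e : imp y (imp one y) = one) by (rewrite hE, hR; apply hR). rewrite h in e. exact e. }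
assert (h5 : P_Re imp one -> P_Ex imp -> P_An imp one -> P_M imp one).
{ intros hR hE hA. assert (hN := h5' hR hE hA). assert (hD := h4 hR hE). u. intros x.
  apply hA. apply hN. apply hD. rewrite hE, hR. apply hR. }
assert (h6 : P_Re imp one -> P_K imp one -> P_L imp one) by (u; intros hR hK x; assert (e := hK x x); rewrite hR in e; exact e).
assert (h7 : P_N imp one -> P_K imp one -> P_L imp one) by (u; intros hN hK x; apply hN, hK).
assert (h7' : P_M imp one -> P_K imp one -> P_L imp one) by (u; intros hM hK x; assert (e := hK one x); rewrite hM in e; exact e).
assert (h8 : P_Re imp one -> P_L imp one -> P_Ex imp -> P_K imp one) by (u; intros hR hL hE x y; rewrite hE, hR; apply hL).
assert (h9 : P_M imp one -> P_L imp one -> P_B imp one -> P_K imp one).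
{ u; intros hM hL hB x y. specialize (hB y one x). rewrite hM, hL, hM in hB. exact hB. }
assert (h9' : P_M imp one -> P_L imp one -> P_starstar imp one -> P_K imp one).
{ u; intros hM hL hS x y. specialize (hS x y one (hL y)). rewrite hM in hS. exact hS. }
assert (h10' : P_Ex imp -> P_B imp one -> P_BB imp one) by (u; intros hE hB x y z; rewrite hE; apply hB).
assert (h10'' : P_Ex imp -> P_BB imp one -> P_B imp one) by (u; intros hE hB x y z; rewrite hE; apply hB).
assert (h11 : P_Re imp one -> P_Ex imp -> P_star imp one -> P_BB imp one).
{ intros hR hE hS. assert (hD := h4 hR hE). u. intros x y z. rewrite (hE (imp z x) y x). apply hS. apply hD. }
assert (h12 : P_N imp one -> P_B imp one -> P_star imp one).
{ u; intros hN hB x y z h. apply hN. assert (e := hB x y z). rewrite h in e. exact e. }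
assert (h13 : P_N imp one -> P_star imp one -> P_Tr imp one).
{ u; intros hN hS x y z h h'. apply hN. assert (e := hS x y z h'). rewrite h in e. exact e. }
assert (h15 : P_N imp one -> P_BB imp one -> P_starstar imp one).
{ u; intros hN hB x y z h. apply hN. assert (e := hB x y z). rewrite h in e. exact e. }
assert (h16 : P_N imp one -> P_starstar imp one -> P_Tr imp one).
{ u; intros hN hS x y z h h'. apply hN. assert (e := hS z x y h). rewrite h' in e. exact e. }
assert (h18 : P_M imp one -> P_BB imp one -> P_Re imp one).
{ u; intros hM hB x. specialize (hB x one one). rewrite !hM in hB. exact hB. }
assert (h18' : P_M imp one -> P_BB imp one -> P_D imp one).
{ u; intros hM hB x y. specialize (hB x one y). rewrite !hM in hB. exact hB. }
assert (h19 : P_M imp one -> P_B imp one -> P_Re imp one).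
{ u; intros hM hB x. specialize (hB one one x). rewrite !hM in hB. exact hB. }
assert (h20 : P_BB imp one -> P_D imp one -> P_N imp one -> P_C imp one).
{ intros hB hD hN. assert (hT := h16 hN (h15 hN hB)). assert (hS := h15 hN hB). u. intros x y z.
  apply hT with (imp (imp (imp y z) z) (imp x z)). apply hB. apply hS. apply hD. }
assert (h23 : P_BB imp one -> P_D imp one -> P_Re imp one -> P_An imp one -> P_N imp one).
{ u; intros hB hD hR hA x h. apply hA; auto. specialize (hD x x). rewrite hR, h in hD. exact hD. }
assert (h24 : P_Re imp one -> P_Ex imp -> P_Tr imp one -> P_starstar imp one).
{ intros hR hE hT. assert (hD := h4 hR hE). u. intros x y z h. rewrite hE. apply hT with z; auto. }
repeat split; auto.
all: try (intros; eauto; fail).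
all: try (u; intros hR x y e; subst; auto; fail).
intros hB hC hK hA. assert (hN := h2 hK hA). u. intros x.
assert (e : forall y, imp y (imp x x) = one).
{ intros y. apply hN. assert (e := hC x y x). rewrite hK in e. exact e. }
apply hN, e.
Qed.
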